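(* Let $-\omega$ be the automorphism of $\mathcal A_\theta^{alg}$ with $U_1\mapsto U_2$, $U_2\mapsto\lambda^{-1/2}U_1^{-1}U_2$, and let $H^0(\mathcal A_\theta^{alg},{}_{-\omega}\mathcal A_\theta^{alg\ast})$ be the space of formal series $\varphi=\sum\varphi_{n,m}U_1^nU_2^m$ with $((-\omega)\cdot a)\varphi=\varphi a$ for all $a\in\mathcal A_\theta^{alg}$. Then every such $\varphi$ is determined by the coefficient $\varphi_{0,0}$, and $\varphi_{n,m}=\lambda^{-\frac{m^2+n^2}{2}}\varphi_{0,0}$ for all $(n,m)\in\mathbb Z^2$.
   Context: Let $\theta\in\mathbb R\setminus\mathbb Q$, $\lambda=e^{2\pi i\theta}$, $\lambda^s:=e^{2\pi i\theta s}$ for $s\in\mathbb R$. $\mathcal A_\theta^{alg}$ is the complex algebra of finite sums $\sum a_{n,m}U_1^nU_2^m$ with $U_1,U_2$ invertible and $U_2U_1=\lambda U_1U_2$; formal series $\sum_{(n,m)\in\mathbb Z^2}\varphi_{n,m}U_1^nU_2^m$ with arbitrary coefficients form an $\mathcal A_\theta^{alg}$-bimodule via left/right multiplication. The automorphism $-\omega$ is the action of $\begin{pmatrix}0&-1\\1&1\end{pmatrix}\in SL(2,\mathbb Z)$, of order $6$. *)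

(* Defs.v *)
From mathcomp Require Import all_boot all_order all_algebra.
From mathcomp Require Import all_classical all_reals all_analysis.
From mathcomp Require Import complex.
Import GRing.Theory Num.Theory.
Set Implicit Arguments. Unset Strict Implicit. Unset Printing Implicit Defensive.
Local Open Scope ring_scope.
Local Open Scope complex_scope.

Section NCTorus.
Variable R : realType.
Variable theta : R.

(* lambda^s := exp(2 pi i theta s), for real s *)
Definition lam (s : R) : R[i] :=
  cos (2 * pi * theta * s) +i* sin (2 * pi * theta * s).

Definition lamz (k : int) : R[i] := lam (k%:~R).

(* A monomial c U1^n U2^m is ((n, m), c). *)
Definition mono := ((int * int) * R[i])%type.

(* An element of A_theta^alg is represented by a finite list of monomials,
   standing for their (finite) sum. *)
Definition alg := seq mono.

(* Formal series sum phi n m U1^n U2^m, arbitrary coefficients. *)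
Definition fseries := int -> int -> R[i].

(* Product of monomials, using U2^m U1^p = lambda^(m p) U1^p U2^m
   (a consequence of U2 U1 = lambda U1 U2). *)
Definition mono_mul (x y : mono) : mono :=
  ((x.1.1 + y.1.1, x.1.2 + y.1.2)%R, x.2 * y.2 * lamz (x.1.2 * y.1.1)).

Definition alg_mul (a b : alg) : alg := [seq mono_mul x y | x <- a, y <- b].

Definition alg_one : alg := [:: ((0, 0)%R, 1)].

Definition alg_scale (c : R[i]) (a : alg) : alg := [seq (x.1, c * x.2) | x <- a].

Definition alg_pow (x : alg) (n : nat) : alg := iter n (alg_mul x) alg_one.

Definition alg_zpow (x xinv : alg) (k : int) : alg :=
  match k with
  | Posz n => alg_pow x n
  | Negz n => alg_pow xinv n.+1
  end.

Definition U1 : alg := [:: ((1, 0)%R, 1)].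
Definition U1inv : alg := [:: ((-1, 0)%R, 1)].
Definition U2 : alg := [:: ((0, 1)%R, 1)].
Definition U2inv : alg := [:: ((0, -1)%R, 1)].

(* -omega : U1 |-> U2, U2 |-> lambda^(-1/2) U1^-1 U2 *)
Definition mw1 : alg := U2.
Definition mw1inv : alg := U2inv.
Definition mw2 : alg := alg_mul (alg_scale (lam (- (1 / 2))) U1inv) U2.
Definition mw2inv : alg := alg_mul (alg_scale (lam (1 / 2)) U2inv) U1.

Definition minus_omega (a : alg) : alg :=
  flatten [seq alg_scale x.2 (alg_mul (alg_zpow mw1 mw1inv x.1.1)
                                      (alg_zpow mw2 mw2inv x.1.2)) | x <- a].

(* left action a . phi : (c U1^n U2^m)(phi_{p,q} U1^p U2^q)
   = c phi_{p,q} lambda^(m p) U1^(n+p) U2^(m+q) *)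
Definition lact (a : alg) (phi : fseries) : fseries := fun k l =>
  \sum_(x <- a) x.2 * lamz (x.1.2 * (k - x.1.1)) * phi (k - x.1.1) (l - x.1.2).

(* right action phi . a : (phi_{p,q} U1^p U2^q)(c U1^n U2^m)
   = phi_{p,q} c lambda^(q n) U1^(p+n) U2^(q+m) *)
Definition ract (phi : fseries) (a : alg) : fseries := fun k l =>
  \sum_(x <- a) phi (k - x.1.1) (l - x.1.2) * x.2 * lamz ((l - x.1.2) * x.1.1).

Definition in_H0 (phi : fseries) : Prop :=
  forall a : alg, lact (minus_omega a) phi = ract phi a.

End NCTorus.

(* Main.v *)
Require Import Defs.
From mathcomp Require Import all_boot all_order all_algebra.
From mathcomp Require Import all_classical all_reals all_analysis.
From mathcomp Require Import complex ring lra.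
Import GRing.Theory Num.Theory.
Local Open Scope ring_scope.
Local Open Scope complex_scope.
Lemma lamD {R : realType} (theta s t : R) : lam theta (s + t) = lam theta s * lam theta t.
Proof.
rewrite /lam mulrDr cosD sinD.
by rewrite [RHS]/GRing.mul /= (addrC (_ * sin _)) (mulrC (sin _)).
Qed.
Lemma lam0 {R : realType} (theta : R) : lam theta 0 = 1.
Proof. by rewrite /lam mulr0 cos0 sin0. Qed.
Lemma lamz0 {R : realType} (theta : R) : lamz theta 0 = 1.
Proof. by rewrite /lamz lam0. Qed.
Lemma lam_neq0 {R : realType} (theta s : R) : lam theta s != 0.
Proof.
apply/eqP => h; have := lamD theta s (- s).
by rewrite subrr lam0 h mul0r; apply/eqP; rewrite oner_eq0.
Qed.
Lemma int_uniq {R : realType} (f g c : int -> R[i]) : (forall k, c k != 0) -> f 0 = g 0 ->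
  (forall k, f (k + 1) = c k * f k) -> (forall k, g (k + 1) = c k * g k) -> forall n, f n = g n.
Proof.
move=> hc h0 hf hg.
have pos : forall n : nat, f n = g n.
  elim=> [//|n IH].
  by rewrite -addn1 PoszD hf hg IH.
have neg : forall n : nat, f (- n%:Z) = g (- n%:Z).
  elim=> [|n IH]; first by rewrite oppr0.
  apply: (mulfI (hc (- n.+1%:Z))).
  rewrite -hf -hg.
  have -> : - (n.+1%:Z) + 1 = - n%:Z by rewrite -addn1 PoszD opprD addrK.
  exact: IH.
case=> n; first exact: pos.
by rewrite NegzE; exact: neg.
Qed.

Lemma test {R : realType} (theta : R)  (phi : fseries R) (hphi : in_H0 theta phi) : 
  (forall k l, lamz theta k * phi k (l - 1) = phi (k - 1) l * lamz theta l) /\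
  (forall k l, lam theta (- (1 / 2)) * lamz theta (k + 1) * phi (k + 1) (l - 1) = phi k (l - 1)).
Proof.
have h1 := hphi (U1 R).
have h2 := hphi (U2 R).
move: h1 h2.
rewrite /minus_omega /mw2 /mw1 /= /alg_pow /= /alg_mul /= /mono_mul /=.
rewrite !(mul0r, mulr0, addr0, add0r, lamz0, mul1r, mulr1).
move=> h1 h2; split=> k l.
  move: (congr1 (fun f => f k l) h1); rewrite /lact /ract /= !big_cons !big_nil /=.
  by rewrite !(mul0r, mulr0, addr0, add0r, lamz0, mul1r, mulr1, subr0, mulr1z).
move: (congr1 (fun f => f k l) h2); rewrite /lact /ract /= !big_cons !big_nil /=.
rewrite !(mul0r, mulr0, addr0, add0r, lamz0, mul1r, mulr1, subr0, opprK, addrK).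
by [].
Qed.

Theorem mainTheorem8 (R : realType) (theta : R)
  (htheta : forall q : rat, theta != ratr q)
  (phi : fseries R) (hphi : in_H0 theta phi) :
  forall n m : int,
    phi n m = lam theta (- ((m ^+ 2 + n ^+ 2)%:~R) / 2) * phi 0 0.
Proof.
have [T1 T2] := test theta phi hphi.
pose c (k : int) := lam theta (- (k%:~R) - 1 / 2).
have hc : forall k, c k != 0 by move=> k; exact: lam_neq0.
have E2 : forall k j, phi (k + 1) j = c k * phi k j.
  move=> k j; have := T2 k (j + 1); rewrite addrK => <-.
  rewrite !mulrA /c /lamz -!lamD -[LHS]mul1r; congr (_ * _).
  rewrite -(lam0 theta); congr lam; rewrite intrD /=; lra.
have E1 : forall k, phi 0 (k + 1) = c k * phi 0 k.
  move=> k; have := T1 1 (k + 1); rewrite addrK subrr.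
  have := E2 0 k; rewrite add0r => -> h.
  have h' : phi 0 (k + 1) = lamz theta (- (k + 1)) * (lamz theta 1 * (c 0 * phi 0 k)).
    rewrite h (mulrC (phi 0 (k + 1))) mulrA /lamz -lamD -[LHS]mul1r; congr (_ * _).
    by rewrite -(lam0 theta); congr lam; rewrite rmorphN /= addrC subrr.
  rewrite h' !mulrA /c /lamz -!lamD; congr (_ * _); congr lam.
  rewrite rmorphN /= !intrD /=; lra.
have gstep : forall k : int, lam theta (- ((k + 1) ^+ 2)%:~R / 2) =
    c k * lam theta (- ((k ^+ 2)%:~R) / 2).
  move=> k; rewrite /c -lamD; congr lam.
  rewrite !rmorphXn /= intrD /=; by field.
have col : forall m n, phi n m = lam theta (- ((n ^+ 2)%:~R) / 2) * phi 0 m.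
  move=> m n; apply: (int_uniq (fun n => phi n m)
    (fun n => lam theta (- ((n ^+ 2)%:~R) / 2) * phi 0 m) c hc).
  - by rewrite expr0n /= oppr0 mul0r lam0 mul1r.
  - by move=> ?; apply: E2.
  - by move=> ?; rewrite gstep mulrA.
have row : forall m, phi 0 m = lam theta (- ((m ^+ 2)%:~R) / 2) * phi 0 0.
  move=> m; apply: (int_uniq (fun m => phi 0 m)
    (fun m => lam theta (- ((m ^+ 2)%:~R) / 2) * phi 0 0) c hc).
  - by rewrite expr0n /= oppr0 mul0r lam0 mul1r.
  - by move=> ?; apply: E1.
  - by move=> ?; rewrite gstep mulrA.
move=> n m; rewrite col row mulrA -lamD; congr (_ * _); congr lam.
by rewrite intrD /=; field.
Qed.
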